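(* Let $d\ge1$ and let $\mu:\mathbb{R}^d\to(0,\infty)$ be localized to the unit ball with $\sum_{a\in\mathbb{Z}^d}\mu(x-a)=1$ and $\mu(x)\ge c(1+|x|)^{-10d}$ for some $c>0$. Then there exists $C>0$ such that for every Schwartz function $K\in\mathcal{S}(\mathbb{R}^d)$, every $B\subset\mathbb{Z}^d$ and every $x\in\mathbb{R}^d$, \[ |K*\mu_B(x)|\le C\left(\int|K(y)|(1+|y|^{10d})\,dy\right)\mu_B(x). \]
   Context: A bounded function $f$ on $\mathbb{R}^d$ is localized to the unit ball if there is a constant $C$ with $|f(x)|\le C$, $|f(x)|\le C|x|^{-10d}$ and $|\nabla f(x)|\le C|x|^{-10d-1}$. $\mu_a(x)=\mu(x-a)$ and $\mu_B=\sum_{b\in B}\mu_b$. *)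

(* Defs.v *)
From HB Require Import structures.
From mathcomp Require Import all_boot all_order all_algebra.
From mathcomp Require Import all_classical all_reals all_analysis.
Set Implicit Arguments. Unset Strict Implicit. Unset Printing Implicit Defensive.
Import Order.TTheory GRing.Theory Num.Theory.
Import numFieldNormedType.Exports.
Local Open Scope classical_set_scope.
Local Open Scope ring_scope.

Section Defs.
Context {R : realType}.

(* Euclidean norm |x| on R^d (the library norm on 'rV is the sup norm). *)
Definition eucl {d : nat} (x : 'rV[R]_d) : R :=
  Num.sqrt (\sum_(i < d) x ord0 i ^+ 2).

Definition evec {d : nat} (i : 'I_d) : 'rV[R]_d := delta_mx ord0 i.

Definition grad_norm {d : nat} (f : 'rV[R]_d -> R) (x : 'rV[R]_d) : R :=
  Num.sqrt (\sum_(i < d) ('D_(evec i) f x) ^+ 2).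

(* f is localized to the unit ball (constant C). f is assumed differentiable,
   since the definition refers to its gradient; the decay bounds are for x <> 0. *)
Definition localized {d : nat} (f : 'rV[R]_d -> R) : Prop :=
  (forall x, differentiable f x) /\
  exists C : R,
    (forall x, `|f x| <= C) /\
    (forall x, x != 0 -> `|f x| <= C / eucl x ^+ (10 * d)) /\
    (forall x, x != 0 -> grad_norm f x <= C / eucl x ^+ (10 * d + 1)).

Fixpoint pder {d : nat} (l : seq 'I_d) (f : 'rV[R]_d -> R) : 'rV[R]_d -> R :=
  match l with
  | [::] => f
  | i :: l' => 'D_(evec i) (pder l' f)
  end.

Definition schwartz {d : nat} (f : 'rV[R]_d -> R) : Prop :=
  (forall (l : seq 'I_d) x, differentiable (pder l f) x) /\
  (forall (l : seq 'I_d) (k : nat), exists M : R,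
      forall x, (1 + eucl x) ^+ k * `|pder l f x| <= M).

(* Lebesgue integral over R^d, computed as iterated one-dimensional Lebesgue
   integrals  int dx_1 ... int dx_d  (by Fubini/Tonelli this equals the
   integral w.r.t. d-dimensional Lebesgue measure for the (continuous,
   absolutely integrable or nonnegative) integrands used below). *)
Fixpoint iint (d : nat) : ('rV[R]_d -> \bar R) -> \bar R :=
  match d return ('rV[R]_d -> \bar R) -> \bar R with
  | 0 => fun f => f 0
  | n.+1 => fun f =>
      (\int[lebesgue_measure]_t
         iint (fun y : 'rV[R]_n => f (row_mx (\row_(j < 1) t) y)))%E
  end.

Definition zvec {d : nat} (a : 'rV[int]_d) : 'rV[R]_d := map_mx (fun z : int => z%:~R) a.

Definition muB {d : nat} (mu : 'rV[R]_d -> R) (B : set 'rV[int]_d)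
  (x : 'rV[R]_d) : \bar R :=
  \esum_(b in B) (mu (x - zvec b))%:E.

Definition convB {d : nat} (K mu : 'rV[R]_d -> R) (B : set 'rV[int]_d)
  (x : 'rV[R]_d) : \bar R :=
  iint (fun y => ((K y)%:E * muB mu B (x - y))%E).

End Defs.

(* Main.v *)
Require Import Defs.
From HB Require Import structures.
From mathcomp Require Import all_boot all_order all_algebra.
From mathcomp Require Import all_classical all_reals all_analysis.
From mathcomp Require Import ring lra measurable_realfun.
Import Order.TTheory GRing.Theory Num.Theory.
Import numFieldNormedType.Exports.
Local Open Scope classical_set_scope.
Local Open Scope ring_scope.
Section IntLemmas.
Import HBNNSimple.
Context {R : realType} d (T : measurableType d) (mu : {measure set T -> \bar R}).
Local Open Scope ereal_scope.

Lemma int_mono_ge0 (f g : T -> \bar R) : (forall x, 0 <= f x) ->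
  (forall x, f x <= g x) -> \int[mu]_x f x <= \int[mu]_x g x.
Proof.
move=> f0 fg; have g0 x : 0 <= g x by exact: le_trans (f0 x) (fg x).
rewrite !ge0_integralTE//; apply: ereal_sup_le => _ /= [h hf <-].
by exists h => //= x; exact: le_trans (hf x) (fg x).
Qed.

Lemma int_mono (f g : T -> \bar R) :
  (forall x, f x <= g x) -> \int[mu]_x f x <= \int[mu]_x g x.
Proof.
move=> fg; rewrite integralE [X in _ <= X]integralE; apply: leeB.
  apply: int_mono_ge0 => x; first exact: funepos_ge0.
  by apply: (@funepos_le _ _ setT); rewrite ?inE // => y _; exact: fg.
apply: int_mono_ge0 => x; first exact: funeneg_ge0.
by apply: (@funeneg_le _ _ setT); rewrite ?inE // => y _; exact: fg.
Qed.

Lemma absr_subpos (a b x : R) : (0 <= a)%R -> (0 <= b)%R -> (a <= x)%R -> (b <= x)%R ->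
  (`|a - b| <= x)%R.
Proof.
move=> a0 b0 ax bx.
have [ab|ba] := lerP a b.
  lra.
lra.
Qed.

Lemma abse_subpos (A B X : \bar R) : 0 <= A -> 0 <= B -> A <= X -> B <= X ->
  `|A - B| <= X.
Proof.
case: A => [a||] //; case: B => [b||] //; case: X => [x||] //=;
  rewrite ?lee_fin ?leey //.
move=> a0 b0 ax bx.
exact: absr_subpos.
Qed.

Lemma int_abs (f : T -> \bar R) :
  `|\int[mu]_x f x| <= \int[mu]_x `|f x|.
Proof.
rewrite integralE; apply: abse_subpos.
- by apply: integral_ge0 => x _; exact: funepos_ge0.
- by apply: integral_ge0 => x _; exact: funeneg_ge0.
- apply: int_mono_ge0 => x; first exact: funepos_ge0.
  have := congr1 (fun h => h x) (fune_abse f) => /= ->.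
  by rewrite leeDl ?funeneg_ge0.
- apply: int_mono_ge0 => x; first exact: funeneg_ge0.
  have := congr1 (fun h => h x) (fune_abse f) => /= ->.
  by rewrite leeDr ?funepos_ge0.
Qed.

Lemma int_scale (g : T -> \bar R) (c : R) : (0 <= c)%R -> (forall x, 0 <= g x) ->
  \int[mu]_x (g x * c%:E) <= \int[mu]_x g x * c%:E.
Proof.
move=> c0 g0; have [->|cpos] := eqVneq c 0%R.
  rewrite mule0; under eq_integral do rewrite mule0.
  by rewrite integral0.
have cgt0 : (0 < c)%R by rewrite lt0r cpos.
have gc0 x : 0 <= g x * c%:E by rewrite mule_ge0.
rewrite !ge0_integralTE//; apply: ge_ereal_sup => _ /= [h hle <-].
have ic0 : (0 <= c^-1)%R by rewrite invr_ge0.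
pose h' := scale_nnsfun h ic0.
have e : sintegral mu h' = c^-1%:E * sintegral mu h.
  by rewrite -sintegralrM; apply: eq_sintegral => x.
have -> : sintegral mu h = c%:E * sintegral mu h'.
  by rewrite e muleA -EFinM mulfV // mul1e.
rewrite muleC; apply: lee_wpmul2r => //.
apply: ereal_sup_ubound; exists h' => //= x.
have := hle x; rewrite /h' /=.
have := g0 x; case: (g x) => [r||] //=; rewrite ?leey //.
rewrite -EFinM !lee_fin => r0 H.
rewrite -(ler_pM2l cgt0) mulrA mulfV ?mul1r //.
by rewrite mulrC.
Qed.



End IntLemmas.

Section IintLemmas.
Context {R : realType}.
Local Open Scope ereal_scope.

Lemma iint0 n : iint (fun _ : 'rV[R]_n => 0) = 0.
Proof.
elim: n => [//|n IH] /=.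
by under eq_integral do rewrite IH; rewrite integral0.
Qed.

Lemma iint_mono n (f g : 'rV[R]_n -> \bar R) :
  (forall y, f y <= g y) -> iint f <= iint g.
Proof.
elim: n f g => [|n IH] f g fg /=; first exact: fg.
by apply: int_mono => t; apply: IH => y.
Qed.

Lemma iint_ge0 n (f : 'rV[R]_n -> \bar R) : (forall y, 0 <= f y) -> 0 <= iint f.
Proof. by move=> f0; rewrite -(iint0 n); apply: iint_mono. Qed.

Lemma iint_abs n (f : 'rV[R]_n -> \bar R) :
  `|iint f| <= iint (fun y => `|f y|).
Proof.
elim: n f => [|n IH] f /=; first by [].
apply: le_trans; first exact: int_abs.
by apply: int_mono => t; apply: IH.
Qed.

Lemma iint_scale n (f : 'rV[R]_n -> \bar R) (c : R) : (0 <= c)%R ->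
  (forall y, 0 <= f y) -> iint (fun y => f y * c%:E) <= iint f * c%:E.
Proof.
move=> c0; elim: n f => [|n IH] f f0 /=; first by [].
apply: le_trans; last first.
  by apply: int_scale => // t; apply: iint_ge0.
by apply: int_mono => t; apply: IH.
Qed.
End IintLemmas.

Section Prod.
Context {R : realType}.
Local Open Scope ereal_scope.
Lemma row_entry0 n (t : R) (y : 'rV[R]_n) :
  (row_mx (\row_(j < 1) t) y : 'rV_(n.+1)) ord0 ord0 = t.
Proof.
rewrite mxE; case: splitP => [j _|k /= e]; first by rewrite mxE.
by [].
Qed.

Lemma row_entryS n (t : R) (y : 'rV[R]_n) (i : 'I_n) :
  (row_mx (\row_(j < 1) t) y : 'rV_(n.+1)) ord0 (lift ord0 i) = y ord0 i.
Proof.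
rewrite mxE; case: splitP => [j /= e|k /= e].
  by move: (ltn_ord j); rewrite -e /bump /=.
by congr (y _ _); apply: val_inj; move: e; rewrite /bump /= add1n => -[].
Qed.

Lemma int_oneDsqr : \int[lebesgue_measure]_t ((oneDsqr t)^-1 : R)%:E = (pi : R)%:E.
Proof.
rewrite ge0_symfun_integralT.
- by rewrite -set_itvcy integral0y_oneDsqr -EFinM mulrC divfK.
- by move=> x; rewrite invr_ge0 /oneDsqr addr_ge0 // sqr_ge0.
- exact: continuous_oneDsqrV.
- by move=> x /=; rewrite /oneDsqr sqrrN.
Qed.

Lemma iint_prod n (c : R) : (0 <= c)%R ->
  iint (fun y : 'rV[R]_n => (c * \prod_(i < n) (oneDsqr (y ord0 i))^-1)%:E)
  <= (c * pi ^+ n)%:E.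
Proof.
elim: n c => [|n IH] c c0 /=; first by rewrite big_ord0 expr0.
have g0 t : (0 <= (oneDsqr t)^-1 :> R)%R.
  by rewrite invr_ge0 /oneDsqr addr_ge0 // sqr_ge0.
apply: (@le_trans _ _ (\int[lebesgue_measure]_t ((c * pi ^+ n)%:E * ((oneDsqr t)^-1)%:E))).
  apply: int_mono => t.
  apply: le_trans; last first.
    have H := IH (c * (oneDsqr t)^-1)%R (mulr_ge0 c0 (g0 t)).
    apply: (le_trans H); rewrite -EFinM lee_fin le_eqVlt; apply/orP; left; apply/eqP; ring.
  apply: iint_mono => y; rewrite lee_fin big_ord_recl row_entry0.
  under eq_bigr do rewrite row_entryS.
  by rewrite mulrA.
rewrite ge0_integralZl_EFin //; last 2 first.
- apply/measurable_EFinP; apply: continuous_measurable_fun.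
  exact: continuous_oneDsqrV.
- by rewrite mulr_ge0 // exprn_ge0 // pi_ge0.
rewrite int_oneDsqr -EFinM exprS.
by rewrite lee_fin le_eqVlt; apply/orP; left; apply/eqP; ring.
Qed.
End Prod.

Set Implicit Arguments. Unset Strict Implicit.
Section Real.
Context {R : realType}.

Lemma eucl_ge0 d (x : 'rV[R]_d) : 0 <= eucl x.
Proof. exact: sqrtr_ge0. Qed.

Lemma eucl_sq d (x : 'rV[R]_d) : eucl x ^+ 2 = \sum_(i < d) x ord0 i ^+ 2.
Proof. by rewrite /eucl sqr_sqrtr // sumr_ge0 // => i _; exact: sqr_ge0. Qed.

Lemma coord_le d (x : 'rV[R]_d) (i : 'I_d) : x ord0 i ^+ 2 <= eucl x ^+ 2.
Proof.
rewrite eucl_sq (bigD1 i) //= lerDl sumr_ge0 // => j _; exact: sqr_ge0.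
Qed.

Lemma sqrt_le_abs (a b : R) : Num.sqrt (a ^+ 2 + b ^+ 2) <= `|a| + `|b|.
Proof.
have ha : `|a| ^+ 2 = a ^+ 2 := real_normK (num_real a).
have hb : `|b| ^+ 2 = b ^+ 2 := real_normK (num_real b).
have h : a ^+ 2 + b ^+ 2 <= (`|a| + `|b|) ^+ 2.
  rewrite sqrrD ha hb -addrA lerD2l lerDr mulrn_wge0 //.
apply: (le_trans (ler_wsqrtr h)).
by rewrite sqrtr_sqr ger0_norm // addr_ge0.
Qed.

Lemma abs_le_sqrt (a b : R) : `|a| <= Num.sqrt (a ^+ 2 + b ^+ 2).
Proof.
have h : a ^+ 2 <= a ^+ 2 + b ^+ 2 by rewrite lerDl sqr_ge0.
by apply: le_trans (ler_wsqrtr h); rewrite sqrtr_sqr.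
Qed.

Lemma quasi_tri d (z y : 'rV[R]_d) : eucl z <= 2 * (eucl (z - y) + eucl y).
Proof.
have h0 : 0 <= 2 * (eucl (z - y) + eucl y) by rewrite mulr_ge0 ?addr_ge0 ?eucl_ge0.
rewrite -[X in _ <= X]ger0_norm // -sqrtr_sqr /eucl ler_wsqrtr //.
rewrite -/(eucl _) -/(eucl _).
apply: (@le_trans _ _ (2 * eucl (z - y) ^+ 2 + 2 * eucl y ^+ 2)%R).
  rewrite !eucl_sq !mulr_sumr -big_split /=; apply: ler_sum => i _.
  rewrite !mxE; set a := z ord0 i; set b := y ord0 i.
  rewrite -subr_ge0.
  have -> : 2 * (a - b) ^+ 2 + 2 * b ^+ 2 - a ^+ 2 = (a - 2 * b) ^+ 2 by ring.
  exact: sqr_ge0.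
have u0 := eucl_ge0 (z - y); have v0 := eucl_ge0 y.
set u := eucl (z - y)%R in u0 *; set v := eucl y in v0 *.
rewrite -subr_ge0.
have -> : (2 * (u + v)) ^+ 2 - (2 * u ^+ 2 + 2 * v ^+ 2) = 2 * u ^+ 2 + 8 * (u * v) + 2 * v ^+ 2 by ring.
by rewrite !addr_ge0 ?mulr_ge0 ?sqr_ge0.
Qed.

Lemma onePlus_pow (e : R) m : 0 <= e -> 1 + e ^+ m.+1 <= (1 + e) ^+ m.+1.
Proof.
move=> e0; elim: m => [|m IH]; first by rewrite !expr1 lerD.
rewrite (exprS e) (exprS (1 + e)).
have h1 : 0 <= e ^+ m.+1 by exact: exprn_ge0.
apply: (@le_trans _ _ ((1 + e) * (1 + e ^+ m.+1))%R).
  rewrite -subr_ge0.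
  have -> : (1 + e) * (1 + e ^+ m.+1) - (1 + e * e ^+ m.+1) = e ^+ m.+1 + e by ring.
  by rewrite addr_ge0.
by rewrite ler_wpM2l // addr_ge0.
Qed.

Lemma pow_split (e : R) m : 0 <= e -> (1 + e) ^+ m <= 2 ^+ m * (1 + e ^+ m).
Proof.
move=> e0; have [e1|e1] := lerP e 1.
  apply: (@le_trans _ _ (2 ^+ m)%R).
    by apply: lerXn2r; rewrite ?nnegrE ?addr_ge0 //; lra.
  by rewrite ler_peMr ?exprn_ge0 // lerDl exprn_ge0.
apply: (@le_trans _ _ ((2 * e) ^+ m)%R).
  by apply: lerXn2r; rewrite ?nnegrE ?addr_ge0 ?mulr_ge0 //; lra.
by rewrite exprMn ler_wpM2l ?exprn_ge0 // lerDr.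
Qed.
End Real.

Set Implicit Arguments. Unset Strict Implicit.
Section Mu.
Context {R : realType}.

Lemma alg_key (c C1 m1 mz P Q S t : R) : 0 < c -> 0 < Q -> 0 <= mz -> 0 <= C1 ->
  m1 * Q <= C1 -> c <= mz * P -> P <= t * Q * S -> m1 <= C1 * t / c * S * mz.
Proof.
move=> c0 Q0 mz0 C10 h1 h2 h3.
rewrite -(ler_pM2r c0) -(ler_pM2r Q0).
have -> : C1 * t / c * S * mz * c * Q = mz * (t * Q * S) * C1.
  by field; rewrite gt_eqF.
apply: (@le_trans _ _ (c * C1)%R).
  rewrite (_ : m1 * c * Q = c * (m1 * Q)); last by ring.
  by apply: ler_wpM2l => //; exact: ltW.
apply: (@le_trans _ _ (mz * P * C1)%R).
  by apply: ler_wpM2r.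
by apply: ler_wpM2r => //; apply: ler_wpM2l.
Qed.

Lemma eucl0 d : eucl (0 : 'rV[R]_d) = 0.
Proof.
by rewrite /eucl big1 ?sqrtr0 // => i _; rewrite mxE expr0n.
Qed.

Lemma mu_upper n (mu : 'rV[R]_n.+1 -> R) : localized mu -> (forall x, 0 < mu x) ->
  exists C1, 0 < C1 /\ forall w, mu w * (1 + eucl w) ^+ (10 * n.+1) <= C1.
Proof.
move=> [_ [C [hC1 [hC2 _]]]] mu0.
set D := (10 * n.+1)%N.
have C0 : 0 <= C by exact: le_trans (normr_ge0 _) (hC1 0).
exists (C * 2 ^+ D + 1); split.
  by rewrite ltr_wpDl // mulr_ge0 // exprn_ge0.
move=> w; apply: (@le_trans _ _ (C * 2 ^+ D)); last by rewrite lerDl.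
have mw0 := ltW (mu0 w).
have e0 := eucl_ge0 w.
have muC : mu w <= C by rewrite -(ger0_norm mw0).
have [e1|e1] := lerP (eucl w) 1.
  apply: (@le_trans _ _ (mu w * 2 ^+ D)).
    by rewrite ler_wpM2l // lerXn2r ?nnegrE ?addr_ge0 //; lra.
  by apply: ler_wpM2r; rewrite ?exprn_ge0.
have wn0 : w != 0.
  by apply/negP => /eqP w0; move: e1; rewrite w0 eucl0; lra.
have eD : 0 < eucl w ^+ D by rewrite exprn_gt0 //; lra.
have h := hC2 w wn0; rewrite (ger0_norm mw0) ler_pdivlMr // in h.
apply: (@le_trans _ _ (mu w * (2 * eucl w) ^+ D)).
  by rewrite ler_wpM2l // lerXn2r ?nnegrE ?addr_ge0 ?mulr_ge0 //; lra.
rewrite exprMn mulrCA mulrC; apply: ler_wpM2r => //; exact: exprn_ge0.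
Qed.

Lemma mu_key n (mu : 'rV[R]_n.+1 -> R) : localized mu -> (forall x, 0 < mu x) ->
  (exists c : R, 0 < c /\ forall x, c / (1 + eucl x) ^+ (10 * n.+1) <= mu x) ->
  exists K, 0 < K /\ forall z y, mu (z - y) <= K * (1 + eucl y ^+ (10 * n.+1)) * mu z.
Proof.
move=> loc mu0 [c [c0 hc]].
have [C1 [C10 hC1]] := mu_upper loc mu0.
set D := (10 * n.+1)%N.
exists (C1 * 3 ^+ D / c * 2 ^+ D); split.
  by rewrite !mulr_gt0 // ?invr_gt0 // exprn_gt0.
move=> z y.
have ez := eucl_ge0 z; have ezy := eucl_ge0 (z - y); have ey := eucl_ge0 y.
have hS := pow_split D ey.
apply: (@le_trans _ _ (C1 * 3 ^+ D / c * (1 + eucl y) ^+ D * mu z)); last first.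
  have k0 : 0 <= C1 * 3 ^+ D / c by rewrite !mulr_ge0 ?invr_ge0 ?exprn_ge0 ?ltW.
  have gen : forall (k a b m : R), 0 <= k -> 0 <= m -> a <= b -> k * a * m <= k * b * m.
    by move=> k a b m k1 m0 ab; apply: ler_wpM2r => //; apply: ler_wpM2l.
  rewrite -[C1 * 3 ^+ D / c * 2 ^+ D * _]mulrA.
  by apply: gen => //; exact: ltW.
apply: (@alg_key c C1 (mu (z - y)) (mu z) ((1 + eucl z) ^+ D) ((1 + eucl (z - y)) ^+ D)
   ((1 + eucl y) ^+ D) (3 ^+ D)) => //.
- by rewrite exprn_gt0 //; lra.
- exact: ltW.
- exact: ltW.
- by have := hc z; rewrite ler_pdivrMr // ?exprn_gt0 //; lra.
- rewrite -!exprMn; apply: lerXn2r; rewrite ?nnegrE ?mulr_ge0 ?addr_ge0 //; try lra.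
  have := quasi_tri z y; nra.
Qed.
End Mu.

Set Implicit Arguments. Unset Strict Implicit.
Section Esum.
Context {R : realType}.
Local Open Scope ereal_scope.

Lemma esum_scale (T : choiceType) (B : set T) (a : T -> R) (k : R) : (0 <= k)%R ->
  (forall b, (0 <= a b)%R) ->
  \esum_(b in B) ((k * a b)%:E) <= k%:E * \esum_(b in B) (a b)%:E.
Proof.
move=> k0 a0; apply: ge_ereal_sup => _ [X [finX XB] <-].
rewrite fsbig_finite //= sumEFin -mulr_sumr EFinM.
apply: lee_wpmul2l => //.
apply: ereal_sup_ubound; exists X => //.
by rewrite fsbig_finite //= sumEFin.
Qed.

Lemma esum_sub (T : choiceType) (B : set T) (a : T -> \bar R) :
  \esum_(b in B) a b <= \esum_(b in [set: T]) a b.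
Proof.
apply: ge_ereal_sup => _ [X [finX XB] <-].
by apply: ereal_sup_ubound; exists X.
Qed.
End Esum.

Set Implicit Arguments. Unset Strict Implicit.

Lemma prod_const_ord (R : realType) m (x : R) : \prod_(i < m) x = x ^+ m.
Proof. by rewrite -(big_mkord xpredT (fun _ => x)) prodr_const_nat subn0. Qed.

Lemma schwartz_bound (R : realType) n (f : 'rV[R]_n.+1 -> R) k : schwartz f ->
  exists M, 0 <= M /\ forall y, (1 + eucl y) ^+ k * `|f y| <= M.
Proof.
move=> [_ h]; have [M hM] := h [::] k; exists M; split; last exact: hM.
apply: le_trans (hM 0); rewrite mulr_ge0 ?exprn_ge0 ?addr_ge0 ?eucl_ge0 //.
Qed.

Lemma I_fin (R : realType) n (Kr Ki : 'rV[R]_n.+1 -> R) : schwartz Kr -> schwartz Ki ->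
  iint (fun y => (Num.sqrt (Kr y ^+ 2 + Ki y ^+ 2) * (1 + eucl y ^+ (10 * n.+1)))%:E)
  \is a fin_num.
Proof.
move=> sr si.
set D := (10 * n.+1)%N.
have [M1 [M10 h1]] := schwartz_bound (D + 2 * n.+1)%N sr.
have [M2 [M20 h2]] := schwartz_bound (D + 2 * n.+1)%N si.
rewrite ge0_fin_numE; last first.
  apply: iint_ge0 => y; rewrite lee_fin mulr_ge0 ?sqrtr_ge0 ?addr_ge0 ?exprn_ge0 ?eucl_ge0 //.
apply: (@le_lt_trans _ _ ((M1 + M2) * pi ^+ n.+1)%:E); last exact: ltey.
apply: le_trans; last by apply: iint_prod; rewrite addr_ge0.
apply: iint_mono => y; rewrite lee_fin prodfV.
set e := eucl y.
have e0 : 0 <= e := eucl_ge0 y.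
have Pr0 : 0 < \prod_(i < n.+1) oneDsqr (y ord0 i).
  by apply: prodr_gt0 => i _; rewrite /oneDsqr ltr_wpDr ?sqr_ge0.
rewrite ler_pdivlMr //.
have hPr : \prod_(i < n.+1) oneDsqr (y ord0 i) <= ((1 + e) ^+ 2) ^+ n.+1.
  rewrite -prod_const_ord; apply: ler_prod => i _.
  rewrite /oneDsqr addr_ge0 ?sqr_ge0 //=.
  apply: (@le_trans _ _ (1 + e ^+ 2)); first by rewrite lerD2l coord_le.
  rewrite sqrrD.
  rewrite expr1n mul1r lerD2r lerDl; exact: mulrn_wge0.
have hD : (1 + e ^+ D) <= (1 + e) ^+ D by apply: onePlus_pow.
have hs := sqrt_le_abs (Kr y) (Ki y).
apply: (@le_trans _ _ ((`|Kr y| + `|Ki y|) * (1 + e) ^+ D * ((1 + e) ^+ 2) ^+ n.+1)).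
  apply: ler_pM.
  - by rewrite mulr_ge0 ?sqrtr_ge0 ?addr_ge0 ?exprn_ge0.
  - exact: ltW.
  - by apply: ler_pM; rewrite ?sqrtr_ge0 ?addr_ge0 ?exprn_ge0.
  - exact: hPr.
rewrite -exprM -mulrA -exprD mulrDl.
by apply: lerD; rewrite mulrC; [exact: h1|exact: h2].
Qed.

Theorem lemma1p4 (R : realType) (n : nat) (mu : 'rV[R]_n.+1 -> R) :
  (forall x, 0 < mu x) ->
  localized mu ->
  (forall x, \esum_(a in [set: 'rV[int]_n.+1]) (mu (x - zvec a))%:E = 1%E) ->
  (exists c : R, 0 < c /\
     forall x, c / (1 + eucl x) ^+ (10 * n.+1) <= mu x) ->
  exists C : R, 0 < C /\
    forall (Kr Ki : 'rV[R]_n.+1 -> R), schwartz Kr -> schwartz Ki ->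
    forall (B : set 'rV[int]_n.+1) (x : 'rV[R]_n.+1),
      convB Kr mu B x \is a fin_num /\ convB Ki mu B x \is a fin_num /\
      ((Num.sqrt (fine (convB Kr mu B x) ^+ 2 + fine (convB Ki mu B x) ^+ 2))%:E
       <= C%:E
          * iint (fun y => (Num.sqrt (Kr y ^+ 2 + Ki y ^+ 2)
                             * (1 + eucl y ^+ (10 * n.+1)))%:E)
          * muB mu B x)%E.
Proof.
move=> mu0 loc pu lower.
have [K [K0 hK]] := mu_key loc mu0 lower.
exists (2 * K); split; first by rewrite mulr_gt0.
move=> Kr Ki sKr sKi B x.
have Ifin := I_fin sKr sKi.
set I := iint _ in Ifin *.
have I0 : (0 <= I)%E.
  apply: iint_ge0 => y; rewrite lee_fin mulr_ge0 ?sqrtr_ge0 ?addr_ge0 ?exprn_ge0 ?eucl_ge0 //.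
have muB0 z : (0 <= muB mu B z)%E.
  by apply: esum_ge0 => b _; rewrite lee_fin ltW.
have muBfin z : muB mu B z \is a fin_num.
  rewrite ge0_fin_numE //; apply: (@le_lt_trans _ _ 1%E); last exact: ltey.
  by rewrite -(pu z); apply: esum_sub.
have muBshift y : (muB mu B (x - y) <=
    (K * (1 + eucl y ^+ (10 * n.+1)))%:E * muB mu B x)%E.
  rewrite /muB; apply: le_trans; last first.
    apply: esum_scale => [|b]; last exact: ltW.
    apply: mulr_ge0; [exact: ltW|by rewrite addr_ge0 ?exprn_ge0 ?eucl_ge0].
  apply: le_esum => b _; rewrite lee_fin.
  have -> : x - y - zvec b = x - zvec b - y by rewrite addrAC.
  exact: hK.
set mx := fine (muB mu B x).
have mxE : muB mu B x = mx%:E by rewrite fineK.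
have mx0 : 0 <= mx by rewrite -lee_fin -mxE.
have bound (Kf : 'rV[R]_n.+1 -> R) :
    (forall y, `|Kf y| <= Num.sqrt (Kr y ^+ 2 + Ki y ^+ 2)) ->
    (`|convB Kf mu B x| <= (fine I * (K * mx))%:E)%E.
  move=> hKf; apply: le_trans; first exact: iint_abs.
  apply: (@le_trans _ _ (iint (fun y => (Num.sqrt (Kr y ^+ 2 + Ki y ^+ 2)
                             * (1 + eucl y ^+ (10 * n.+1)))%:E * (K * mx)%:E))%E).
    apply: iint_mono => y.
    rewrite abseM (gee0_abs (muB0 _)) abse_EFin -(fineK (muBfin (x - y))) -!EFinM lee_fin.
    have := muBshift y; rewrite mxE -(fineK (muBfin (x - y))) -EFinM lee_fin => hs.
    apply: le_trans; first exact: (ler_wpM2l (normr_ge0 _) hs).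
    rewrite (_ : Num.sqrt (Kr y ^+ 2 + Ki y ^+ 2) * (1 + eucl y ^+ (10 * n.+1)) * (K * mx)
       = (K * (1 + eucl y ^+ (10 * n.+1)) * mx) * Num.sqrt (Kr y ^+ 2 + Ki y ^+ 2)); last by ring.
    rewrite mulrC; apply: ler_wpM2l => //.
    apply: mulr_ge0 => //; apply: mulr_ge0; [exact: ltW|by rewrite addr_ge0 ?exprn_ge0 ?eucl_ge0].
  apply: le_trans; first apply: iint_scale.
  - by apply: mulr_ge0 => //; exact: ltW.
  - move=> y; rewrite lee_fin mulr_ge0 ?sqrtr_ge0 ?addr_ge0 ?exprn_ge0 ?eucl_ge0 //.
  by rewrite -/I -(fineK Ifin) -EFinM.
have Afin (Kf : 'rV[R]_n.+1 -> R) :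
    (forall y, `|Kf y| <= Num.sqrt (Kr y ^+ 2 + Ki y ^+ 2)) ->
    convB Kf mu B x \is a fin_num.
  by move=> h; rewrite fin_num_abs (le_lt_trans (bound _ h)) ?ltey.
have hr y : `|Kr y| <= Num.sqrt (Kr y ^+ 2 + Ki y ^+ 2) by exact: abs_le_sqrt.
have hi y : `|Ki y| <= Num.sqrt (Kr y ^+ 2 + Ki y ^+ 2).
  by rewrite addrC; exact: abs_le_sqrt.
have ar := bound _ hr; have ai := bound _ hi.
have fr := Afin _ hr; have fi := Afin _ hi.
split => //; split => //.
rewrite -(fineK fr) abse_EFin lee_fin in ar.
rewrite -(fineK fi) abse_EFin lee_fin in ai.
rewrite mxE -(fineK Ifin) -!EFinM lee_fin.
apply: le_trans; first exact: sqrt_le_abs.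
rewrite (_ : 2 * K * fine I * mx = fine I * (K * mx) + fine I * (K * mx)); last by ring.
exact: lerD.
Qed.
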